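(* Let $\mathcal{G}=(\mathcal{V},E)$ be an undirected graph with $\mathcal{V}=\{1,\dots,N\}$ and set of cliques $\mathcal{C}$. For each $i\in\mathcal{V}$ let $\mathcal{X}_i$ be a finite alphabet and $g_i:\mathcal{X}_i\to\mathcal{Y}_i$ a function. Let $X=(X_1,\dots,X_N)$ be a random variable on $\mathcal{X}=\prod_i\mathcal{X}_i$ with $p_X(x)>0$ for all $x\in\mathcal{X}$, and suppose there is a family of potential functions $\{\psi_C,\ C\in\mathcal{C}\}$, $\psi_C:\mathcal{X}_C\to\mathbb{R}$, with $$p_X(x)=\frac{1}{Z}\prod_{C\in\mathcal{C}}\psi_C(x)\ \text{ for all } x\in\mathcal{X},\qquad Z=\sum_{x\in\mathcal{X}}\prod_{C\in\mathcal{C}}\psi_C(x).$$ Let $Y=(g_1(X_1),\dots,g_N(X_N))=g(X)$. Assume that for every $i\in\mathcal{V}$ there is at most one clique $C\ni i$ such that $\psi_C$ strictly depends on $x_i$. For each $i$ let $C'(i)$ be that clique (or, if no potential strictly depends on $x_i$, an arbitrary clique containing $i$), and let $\mathcal{V}_1,\dots,\mathcal{V}_L$ be the partition of $\mathcal{V}$ into classes of vertices having the same $C'(i)$; write $C'(\mathcal{V}_\ell)$ for the common clique of class $\mathcal{V}_\ell$. Then $Y$ is a Markov random field on $\mathcal{G}$. Moreover, $p_Y(y)=\frac{1}{Z}\prod_{C\in\mathcal{C}}U_C(y)$ for all $y$ in the image of $g$, where the functions $U_C$ are defined by $$U_{C'(\mathcal{V}_\ell)}(g(x))=\sum_{x'_{\mathcal{V}_\ell}\in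 g_{\mathcal{V}_\ell}^{-1}(g_{\mathcal{V}_\ell}(x_{\mathcal{V}_\ell}))}\psi_{C'(\mathcal{V}_\ell)}(x'_{\mathcal{V}_\ell},x_{\mathcal{V}\setminus\mathcal{V}_\ell}),\quad \ell=1,\dots,L,$$ and $U_C(g(x))=\psi_C(x)$ for all $C\in\mathcal{C}\setminus\bigcup_{j\in\mathcal{V}}\{C'(j)\}$ (these definitions are well posed, i.e., the right-hand sides depend on $x$ only through $g(x)$).
   Context: A clique is a singleton or a set $C\subseteq\mathcal{V}$ with all pairs of its elements joined by edges. For $A\subseteq\mathcal{V}$, $x_A=(x_i,i\in A)$, $\mathcal{X}_A=\prod_{i\in A}\mathcal{X}_i$, $g_A(x_A)=(g_i(x_i),i\in A)$; a potential $\psi_A$ on $\mathcal{X}_A$ is regarded as a function on $\mathcal{X}$ via $\psi_A(x)=\psi_A(x_A)$. $X$ is a Markov random field (MRF) on $\mathcal{G}$ if for every $i$, $p_{X_i|X_{\mathcal{V}\setminus\{i\}}}=p_{X_i|X_{\mathcal{N}_i}}$, where $\mathcal{N}_i$ is the set of neighbors of $i$. For a clique $C$ containing $i$, $\psi_C$ depends on $x_i$ only via $y_i=g_i(x_i)$ if $\psi_C(x_{\mathcal{V}\setminus\{i\}},x_i)=\psi_C(x_{\mathcal{V}\setminus\{i\}},x_i')$ for all $x_{\mathcal{V}\setminus\{i\}}$ and all $x_i,x_i'$ with $g_i(x_i)=g_i(x_i')$; otherwise $\psi_C$ strictly depends on $x_i$. *)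

(* Defs.v *)
From mathcomp Require Import all_boot all_order all_algebra.
Set Implicit Arguments. Unset Strict Implicit. Unset Printing Implicit Defensive.
Import Order.TTheory GRing.Theory Num.Theory.
Local Open Scope ring_scope.

Section MRF.
Variable N : nat.

(* Undirected simple graph on V = 'I_N (vertices 1..N renumbered 0..N-1),
   given by an adjacency relation (symmetry/irreflexivity are hypotheses). *)

Definition is_clique (adj : rel 'I_N) (C : {set 'I_N}) : bool :=
  (C != set0) && [forall i in C, forall j in C, (i != j) ==> adj i j].

Definition nbrs (adj : rel 'I_N) (i : 'I_N) : {set 'I_N} := [set j | adj i j].

Definition prob {R : numDomainType} {Om : finType} (p : Om -> R) (E : pred Om) : R :=
  \sum_(w | E w) p w.

Definition agree {Om : Type} {Y : 'I_N -> eqType} (Z : forall j, Om -> Y j)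
  (A : {set 'I_N}) (y : forall j, Y j) : pred Om :=
  fun w => [forall j in A, Z j w == y j].

(* The random field (Z_1,..,Z_N) on the finite probability space (Om,p) is a
   Markov random field on the graph: for every i,
   p_{Z_i | Z_{V\{i}}} = p_{Z_i | Z_{N_i}} (wherever the conditioning event
   has positive probability). *)
Definition is_MRF {R : numFieldType} (adj : rel 'I_N) {Om : finType}
  (p : Om -> R) {Y : 'I_N -> eqType} (Z : forall j, Om -> Y j) : Prop :=
  forall (i : 'I_N) (y : forall j, Y j),
    0 < prob p (agree Z [set~ i] y) ->
    prob p (agree Z setT y) / prob p (agree Z [set~ i] y)
    = prob p (agree Z (i |: nbrs adj i) y) / prob p (agree Z (nbrs adj i) y).

Definition local_to {R : Type} {X : 'I_N -> finType}
  (C : {set 'I_N}) (psi : {dffun forall i, X i} -> R) : Prop :=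
  forall x x' : {dffun forall i, X i}, (forall j, j \in C -> x j = x' j) ->
    psi x = psi x'.

Definition depends_only_via {R : Type} {X : 'I_N -> finType} {Y : 'I_N -> eqType}
  (g : forall i, X i -> Y i) (i : 'I_N) (psi : {dffun forall i, X i} -> R) : Prop :=
  forall x x' : {dffun forall i, X i}, (forall j, j != i -> x j = x' j) ->
    g i (x i) = g i (x' i) -> psi x = psi x'.

Definition strictly_depends {R : Type} {X : 'I_N -> finType} {Y : 'I_N -> eqType}
  (g : forall i, X i -> Y i) (i : 'I_N) (psi : {dffun forall i, X i} -> R) : Prop :=
  ~ depends_only_via g i psi.

Definition gmap {X : 'I_N -> finType} {Y : 'I_N -> eqType}
  (g : forall i, X i -> Y i) (x : {dffun forall i, X i}) : forall i, Y i :=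
  fun i => g i (x i).

End MRF.

(* Main.v *)
Require Import Defs.
From mathcomp Require Import all_boot all_order all_algebra.
From Stdlib Require Import Classical_Prop.
Import Order.TTheory GRing.Theory Num.Theory.
Local Open Scope ring_scope.

Section P.
Variables (R : realFieldType) (N : nat) (adj : rel 'I_N)
  (X : 'I_N -> finType) (Y : 'I_N -> eqType) (g : forall i, X i -> Y i)
  (psi : {set 'I_N} -> {dffun forall i, X i} -> R).
Local Notation cfg := {dffun forall i, X i}.
Hypothesis psi_local : forall C, is_clique adj C -> local_to C (psi C).
Variable Cp : 'I_N -> {set 'I_N}.
Hypothesis Cp_clique : forall i, is_clique adj (Cp i).
Hypothesis Cp_mem : forall i, i \in Cp i.
Hypothesis Cp_strict : forall i C, is_clique adj C -> i \in C ->
      strictly_depends g i (psi C) -> C = Cp i.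

Definition mrg (P : pred 'I_N) (x y : cfg) : cfg :=
  [ffun k => if P k then y k else x k].
Lemma mrgE P x y k : mrg P x y k = if P k then y k else x k.
Proof. by rewrite /mrg ffunE. Qed.

Definition ind k (f : cfg -> R) := forall u v : cfg,
  (forall j, j != k -> u j = v j) -> f u = f v.
Definition cond (f : cfg -> R) k (x x' : cfg) :=
  x k = x' k \/ (g k (x k) = g k (x' k) /\ depends_only_via g k f) \/ ind k f.

Lemma multi_aux (f : cfg -> R) (s : seq 'I_N) : forall (x x' : cfg),
  (forall k, k \notin s -> x k = x' k) -> (forall k, cond f k x x') -> f x = f x'.
Proof.
elim: s => [|a s IH] x x' Hs Hc.
  have -> : x = x' by apply/ffunP => k; apply: Hs.
  by [].
pose x1 := mrg (pred1 a) x x'.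
have E1 : f x = f x1.
  case: (Hc a) => [Ha|[[Hg Hd]|Hi]].
  - have -> : x = x1 by apply/ffunP => k; rewrite mrgE /=; case: eqP => // ->.
    by [].
  - apply: Hd; first by move=> j Hj; rewrite mrgE /= (negbTE Hj).
    by rewrite mrgE /= eqxx.
  - by apply: Hi => j Hj; rewrite mrgE /= (negbTE Hj).
rewrite E1; apply: IH.
  move=> k Hk; rewrite mrgE /=; case: eqP => // Hka.
  by apply: Hs; rewrite in_cons negb_or Hk andbT; apply/eqP.
move=> k; rewrite /cond mrgE /=; case: eqP => Hka; first by left.
exact: Hc.
Qed.

Lemma multi (f : cfg -> R) (x x' : cfg) :
  (forall k, cond f k x x') -> f x = f x'.
Proof. move=> Hc; apply: (@multi_aux f (enum 'I_N)) => // k; by rewrite mem_enum. Qed.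

Lemma KD C k (a b : cfg) : is_clique adj C -> Cp k != C ->
  g k (a k) = g k (b k) -> cond (psi C) k a b.
Proof.
move=> cC ne geq; right.
case kC: (k \in C).
  left; split => //.
  apply: NNPP => nd.
  have EC := Cp_strict k C cC kC nd.
  by rewrite EC eqxx in ne.
right => u v Huv; apply: (psi_local C cC) => j jC; apply: Huv.
by apply/eqP => ejk; rewrite ejk kC in jC.
Qed.

Lemma KDout C k (a b : cfg) : is_clique adj C -> k \notin C -> cond (psi C) k a b.
Proof.
move=> cC kC; right; right => u v Huv; apply: (psi_local C cC) => j jC; apply: Huv.
by apply/eqP => ejk; rewrite -ejk jC in kC.
Qed.

Definition Sc C (x x' : cfg) := [forall k, if Cp k == C then g k (x' k) == g k (x k)
                          else x' k == x k].
Definition cls C := [exists j, C == Cp j].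
Definition V C (x : cfg) := if cls C then \sum_(x' | Sc C x x') psi C x' else psi C x.

Lemma V_inv C (x y : cfg) : is_clique adj C ->
  (forall k, k \in C -> g k (x k) = g k (y k)) -> V C x = V C y.
Proof.
move=> cC Hg; rewrite /V; case: ifP => cl; last first.
  apply: multi => k.
  have ne : Cp k != C by apply/eqP => e; move/negbT: cl => /existsPn/(_ k); rewrite e eqxx.
  case kC: (k \in C); last by apply: KDout => //; rewrite kC.
  by apply: KD => //; apply: Hg.
pose P := fun k => Cp k == C.
rewrite (reindex_onto (mrg P x) (mrg P y)); last first.
  move=> v /forallP Hv; apply/ffunP => k; rewrite !mrgE.
  case: ifP => Pk; first by rewrite Pk.
  by have := Hv k; rewrite /P in Pk; rewrite Pk => /eqP ->.
apply: eq_big.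
  move=> u; apply/idP/idP.
    case/andP => /forallP H1 /eqP H2; apply/forallP => k.
    have E2 := f_equal (fun f : cfg => f k) H2.
    move: (H1 k) E2; rewrite !mrgE /P /=; case Pk: (Cp k == C).
      move=> /eqP -> _; apply/eqP; apply: Hg; move/eqP: Pk => <-; apply: Cp_mem.
    by move=> _ ->.
  move/forallP => H; apply/andP; split.
    apply/forallP => k; move: (H k); rewrite !mrgE /P /=.
    case Pk: (Cp k == C); last by rewrite eqxx.
    move=> /eqP ->; apply/eqP/esym; apply: Hg; move/eqP: Pk => <-; apply: Cp_mem.
  apply/eqP/ffunP => k; move: (H k); rewrite !mrgE /P /=.
  case Pk: (Cp k == C) => //.
  by move/eqP => ->.
move=> u /andP[_ /eqP H2]; apply: multi => k.
have E2 := f_equal (fun f : cfg => f k) H2.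
move: E2; rewrite !mrgE /P /=.
case Pk: (Cp k == C) => Huk; first by rewrite /cond mrgE /P /= Pk; left.
case kC: (k \in C); last by apply: KDout => //; rewrite kC.
apply: KD => //; first by rewrite Pk.
by rewrite mrgE /P /= Pk -Huk; apply: Hg.
Qed.

Definition T (ls : seq {set 'I_N}) (x x' : cfg) :=
  [forall k, if Cp k \in ls then g k (x' k) == g k (x k) else x' k == x k].

Lemma fact_seq x ls : uniq ls -> all (is_clique adj) ls ->
  \sum_(x' | T ls x x') \prod_(l <- ls) psi l x' =
  \prod_(l <- ls) \sum_(x' | Sc l x x') psi l x'.
Proof.
elim: ls => [|l ls IH] /=.
  move=> _ _; rewrite big_nil.
  rewrite (eq_bigl (pred1 x)); first by rewrite big_pred1_eq big_nil.
  move=> u /=; apply/forallP/eqP => [H|->]; last by move=> k; rewrite eqxx.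
  by apply/ffunP => k; have := H k; rewrite /= => /eqP.
move=> /andP[lnin uls] /andP[cl call].
rewrite big_cons -IH // big_distrlr /= pair_big_dep.
pose Pl := fun k => Cp k == l.
rewrite (reindex_onto (fun u => (mrg Pl x u, mrg Pl u x)) (fun p => mrg Pl p.2 p.1)) /=;
  last first.
  case=> v w /= /andP[/forallP Hv /forallP Hw]; congr pair; apply/ffunP => k;
    rewrite !mrgE /Pl /=; case Pk: (Cp k == l) => //.
    by have := Hv k; rewrite Pk => /eqP.
  have := Hw k; have -> : (Cp k \in ls) = false.
    by move/eqP: Pk => ->; apply/negbTE.
  by move/eqP.
apply: eq_big.
  move=> u; apply/idP/idP.
    move/forallP => H; apply/andP; split; last first.
      by apply/eqP/ffunP => k; rewrite !mrgE /Pl /=; case: (Cp k == l).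
    apply/andP; split; apply/forallP => k; move: (H k); rewrite !mrgE /Pl /= in_cons.
      by case Pk: (Cp k == l) => //= _; rewrite eqxx.
    case Pk: (Cp k == l) => //= _.
    have -> : (Cp k \in ls) = false by move/eqP: Pk => ->; apply/negbTE.
    by rewrite eqxx.
  move=> /andP[/andP[H1 H2] _]; move/forallP: H1 => H1; move/forallP: H2 => H2.
  apply/forallP => k.
  move: (H1 k) (H2 k); rewrite !mrgE /Pl /= in_cons.
  case Pk: (Cp k == l) => /=.
    move=> -> _; by [].
  by move=> _.
move=> u /forallP H; rewrite big_cons; apply/esym; congr (_ * _).
  apply: multi => k.
  case Pk: (Cp k == l); first by rewrite /cond mrgE /Pl /= Pk; left.
  have := H k; rewrite in_cons Pk /=.
  case: (Cp k \in ls) => /eqP Huk; last by rewrite /cond mrgE /Pl /= Pk Huk; left.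
  case kC: (k \in l); last by apply: KDout => //; rewrite kC.
  apply: KD => //; first by rewrite Pk.
  by rewrite mrgE /Pl /= Pk Huk.
rewrite big_seq_cond [in RHS]big_seq_cond; apply: eq_bigr => l' /andP[l'ls _].
have cl' : is_clique adj l' by move/allP: call; apply.
apply: multi => k.
case Pk: (Cp k == l); last by rewrite /cond mrgE /Pl /= Pk; left.
have := H k; rewrite in_cons Pk /= => /eqP Huk.
have ne : Cp k != l'.
  by move/eqP: Pk => ->; apply/eqP => el; rewrite el l'ls in lnin.
case kC: (k \in l'); last by apply: KDout => //; rewrite kC.
by apply: KD => //; rewrite mrgE /Pl /= Pk Huk.
Qed.

Lemma fact_all (x : cfg) :
  \sum_(x' : cfg | [forall k, g k (x' k) == g k (x k)])
     \prod_(C | is_clique adj C) psi C x' =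
  \prod_(C | is_clique adj C) V C x.
Proof.
rewrite (eq_bigr (fun x' => (\prod_(C | is_clique adj C && cls C) psi C x') *
            \prod_(C | is_clique adj C && ~~ cls C) V C x)); last first.
  move=> x' /forallP Hx'; rewrite (bigID cls) /=; congr (_ * _).
  apply: eq_bigr => C /andP[cC ncl].
  have -> : psi C x' = V C x' by rewrite /V (negbTE ncl).
  by apply: V_inv => // k _; apply/eqP.
rewrite -big_distrl /= [in RHS](bigID cls) /=; congr (_ * _).
pose ls := [seq C <- index_enum {set 'I_N} | is_clique adj C && cls C].
have Eprod : forall F : {set 'I_N} -> R,
    \prod_(C | is_clique adj C && cls C) F C = \prod_(C <- ls) F C.
  by move=> F; rewrite big_filter.
under eq_bigr => x' _ do rewrite Eprod.
rewrite Eprod.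
have -> : \prod_(C <- ls) V C x = \prod_(C <- ls) \sum_(x' | Sc C x x') psi C x'.
  rewrite big_seq_cond [in RHS]big_seq_cond; apply: eq_bigr => C /andP[].
  by rewrite mem_filter => /andP[/andP[_ clC]] _ _; rewrite /V clC.
rewrite -fact_seq; last 2 first.
- by apply: filter_uniq; apply: index_enum_uniq.
- by apply/allP => C; rewrite mem_filter => /andP[/andP[]].
apply: eq_bigl => x'; rewrite /T; apply: eq_forallb => k.
have -> : Cp k \in ls.
  rewrite mem_filter Cp_clique /= mem_index_enum andbT.
  by apply/existsP; exists k.
by [].
Qed.

Variable pX : cfg -> R.
Hypothesis pX_pos : forall x, 0 < pX x.
Hypothesis pX_fact : forall x, pX x =
      (\sum_(x' : cfg) \prod_(C | is_clique adj C) psi C x')^-1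
      * \prod_(C | is_clique adj C) psi C x.
Hypothesis adj_irr : irreflexive adj.

Definition sameg (u v : cfg) := [forall k, g k (u k) == g k (v k)].
Definition pY (x : cfg) := prob pX (fun x' : cfg => sameg x' x).
Definition nf (x : cfg) : R := \sum_(u | sameg u x) 1.

Lemma sameg_trans {a b c : cfg} : sameg a b -> sameg b c -> sameg a c.
Proof.
move=> /forallP H1 /forallP H2; apply/forallP => k.
by rewrite (eqP (H1 k)) (eqP (H2 k)).
Qed.
Lemma sameg_sym {a b : cfg} : sameg a b -> sameg b a.
Proof. by move=> /forallP H1; apply/forallP => k; rewrite (eqP (H1 k)). Qed.
Lemma sameg_refl (a : cfg) : sameg a a.
Proof. by apply/forallP => k. Qed.

Lemma pY_fact x : pY x =
  (\sum_(x' : cfg) \prod_(C | is_clique adj C) psi C x')^-1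
      * \prod_(C | is_clique adj C) V C x.
Proof.
rewrite /pY /prob (eq_bigr _ (fun w _ => pX_fact w)) -big_distrr /=.
by rewrite -fact_all.
Qed.

Lemma nf_pos x : 0 < nf x.
Proof.
rewrite /nf (bigD1 x) /=; last exact: sameg_refl.
apply: (lt_le_trans ltr01); rewrite lerDl; apply: sumr_ge0 => *; exact: ler01.
Qed.

Lemma avg (E : pred cfg) : (forall u v, sameg u v -> E u = E v) ->
  prob pX E = \sum_(x | E x) pY x / nf x.
Proof.
move=> HE; rewrite /prob.
under [RHS]eq_bigr => x Ex do rewrite /pY /prob mulr_suml.
rewrite (exchange_big_dep E) /=; last by move=> x u Ex Hux; rewrite (HE u x Hux).
apply: eq_bigr => u Eu.
rewrite (eq_bigr (fun _ => pX u / nf u * 1)); last first.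
  move=> x /andP[_ Hux]; rewrite mulr1; congr (_ / _).
  rewrite /nf; apply: eq_bigl => w; apply/idP/idP => H.
    exact: (sameg_trans H (sameg_sym Hux)).
  exact: (sameg_trans H Hux).
rewrite -mulr_sumr.
have -> : \sum_(i | E i && sameg u i) (1 : R) = nf u.
  rewrite /nf; apply: eq_bigl => w; apply/idP/idP.
    by case/andP => _ H; apply: sameg_sym.
  move=> H; rewrite (HE w u H) Eu /=; exact: sameg_sym.
by rewrite divfK // gt_eqF // nf_pos.
Qed.

Definition sig i (p : cfg * cfg) := (mrg (pred1 i) p.2 p.1, mrg (pred1 i) p.1 p.2).
Lemma sigK i : cancel (sig i) (sig i).
Proof.
case=> a b; rewrite /sig /=; congr pair; apply/ffunP => k; rewrite !mrgE /=;
  by case: (k == i).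
Qed.

Lemma pairtrick i (W : cfg -> R) (P1 P2 Q1 Q2 : pred cfg) :
  (forall p, (P1 (sig i p).1 && P2 (sig i p).2) = (Q1 p.1 && Q2 p.2)) ->
  (forall p, Q1 p.1 -> Q2 p.2 -> W (sig i p).1 * W (sig i p).2 = W p.1 * W p.2) ->
  (\sum_(x | P1 x) W x) * (\sum_(x | P2 x) W x) =
  (\sum_(x | Q1 x) W x) * (\sum_(x | Q2 x) W x).
Proof.
move=> HP HW; rewrite !big_distrlr.
rewrite (pair_big_dep P1 (fun _ => P2) (fun a b => W a * W b)).
rewrite (pair_big_dep Q1 (fun _ => Q2) (fun a b => W a * W b)).
rewrite (reindex_inj (can_inj (sigK i))) /=.
apply: eq_big => p; first exact: HP.
move=> Hc; have /andP[h1 h2] : Q1 p.1 && Q2 p.2 by rewrite -HP; exact: Hc.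
exact: (HW p h1 h2).
Qed.

Lemma nf_sig i u v : nf (sig i (u, v)).1 * nf (sig i (u, v)).2 = nf u * nf v.
Proof.
apply/esym; rewrite /nf.
apply: (@pairtrick i (fun _ => 1)) => //.
case=> a b /=; rewrite /sameg.
apply/andP/andP => [[/forallP H1 /forallP H2]|[/forallP H1 /forallP H2]]; split;
  apply/forallP => k; move: (H1 k) (H2 k); rewrite !mrgE /=; case: (k == i) => /=;
  by move=> h1 h2; rewrite ?h1 ?h2.
Qed.

Lemma clique_adj C (i k : 'I_N) : is_clique adj C -> i \in C -> k \in C -> k != i -> adj i k.
Proof.
case/andP => _ /forallP H iC kC ki.
have := H i; rewrite iC /= => /forallP /(_ k); rewrite kC /=.
by rewrite eq_sym ki.
Qed.

Lemma mrf : is_MRF adj pX (fun j (x : cfg) => g j (x j)).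
Proof.
move=> i y Hpos.
set Z := (fun j (x : cfg) => g j (x j)).
have sat : forall A (u v : cfg), sameg u v -> agree Z A y u = agree Z A y v.
  move=> A u v /forallP H; rewrite /agree; apply: eq_forallb => j.
  by rewrite /Z (eqP (H j)).
set Nb := nbrs adj i.
have nz1 : prob pX (agree Z [set~ i] y) != 0 by rewrite gt_eqF.
have sub : forall w, agree Z [set~ i] y w -> agree Z Nb y w.
  move=> w /forallP H; apply/forallP => j; apply/implyP => jN.
  have := H j; rewrite in_setC1; move/implyP; apply.
  apply/eqP => eji; move: jN; rewrite /Nb /nbrs inE eji.
  by rewrite adj_irr.
have nz2 : prob pX (agree Z Nb y) != 0.
  rewrite gt_eqF //; rewrite /prob (bigID (agree Z [set~ i] y)) /=.
  apply: ltr_wpDr; first by apply: sumr_ge0 => w _; apply/ltW.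
  rewrite (eq_bigl (agree Z [set~ i] y)) //.
  move=> w; apply/idP/idP; first by case/andP.
  by move=> H; rewrite H sub.
apply/eqP; rewrite eqr_div //; apply/eqP.
rewrite !(avg _ (sat _)).
apply: (@pairtrick i).
  case=> u v /=; rewrite /agree /Z /=.
  apply/andP/andP => [[/forallP H1 /forallP H2]|[/forallP H1 /forallP H2]]; split;
    apply/forallP => j; apply/implyP.
  - rewrite in_setU1 => /orP[/eqP ->|jN].
      by have := H1 i; rewrite in_setT mrgE /= eqxx.
    have ji : j != i by apply/eqP => eji; move: jN; rewrite /Nb /nbrs inE eji adj_irr.
    by have := H2 j; rewrite jN mrgE /= (negbTE ji).
  - rewrite in_setC1 => ji.
    by have := H1 j; rewrite in_setT mrgE /= (negbTE ji).
  - move=> _; rewrite mrgE /=; case ji: (j == i).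
      by have := H1 j; rewrite in_setU1 ji /=.
    by have := H2 j; rewrite in_setC1 ji /=.
  - move=> jN.
    have ji : j != i by apply/eqP => eji; move: jN; rewrite /Nb /nbrs inE eji adj_irr.
    rewrite mrgE /= (negbTE ji).
    by have := H1 j; rewrite (setU1r _ jN).
case=> u v /= /forallP Hu /forallP Hv.
have WW : forall a b : cfg, pY a / nf a * (pY b / nf b) = (pY a * pY b) / (nf a * nf b).
  by move=> a b; rewrite invfM mulrACA.
rewrite !WW nf_sig; congr (_ / _).
rewrite !pY_fact mulrACA [RHS]mulrACA -!big_split /=; congr (_ * _).
apply: eq_bigr => C cC.
have gu : forall k, k \in C -> k != i -> i \in C -> g k (u k) = y k.
  move=> k kC ki iC; have := Hu k; rewrite in_setU1 (negbTE ki) /=.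
  have -> : k \in Nb by rewrite /Nb /nbrs inE; apply: (clique_adj C i k).
  by move/eqP.
have gv : forall k, k != i -> g k (v k) = y k.
  by move=> k ki; have := Hv k; rewrite in_setC1 ki /= => /eqP.
case iC: (i \in C).
  congr (_ * _); apply: V_inv => // k kC; rewrite mrgE /=; case ki: (k == i) => //;
    have ki' : k != i by rewrite ki.
    by rewrite gv // gu.
  by rewrite gv // gu.
rewrite mulrC; congr (_ * _); apply: V_inv => // k kC; rewrite mrgE /=;
  have ki : (k == i) = false by apply/eqP => e; move: kC; rewrite e iC.
  by rewrite ki.
by rewrite ki.
Qed.

Definition U (C : {set 'I_N}) (y : forall i, Y i) : R :=
  if [pick x : cfg | [forall k, g k (x k) == y k]] is Some x then V C x else 0.

Lemma U_gmap C (x : cfg) : is_clique adj C -> U C (gmap g x) = V C x.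
Proof.
move=> cC; rewrite /U; case: pickP => [x0 /forallP H|H].
  by apply: V_inv => // k _; apply/eqP; exact: (H k).
by have := H x; move/negbT/negP; case; apply/forallP => k.
Qed.

End P.

Arguments mrf {R N adj X Y g psi} psi_local {Cp} Cp_clique Cp_mem Cp_strict {pX} pX_pos pX_fact adj_irr.
Arguments U_gmap {R N adj X Y g psi} psi_local {Cp} Cp_mem Cp_strict C x _.
Arguments pY_fact {R N adj X Y g psi} psi_local {Cp} Cp_clique Cp_mem Cp_strict {pX} pX_fact x.

Theorem proposition1 (R : realFieldType) (N : nat) (adj : rel 'I_N)
  (adj_sym : symmetric adj) (adj_irr : irreflexive adj)
  (X : 'I_N -> finType) (Y : 'I_N -> eqType) (g : forall i, X i -> Y i)
  (pX : {dffun forall i, X i} -> R)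
  (psi : {set 'I_N} -> {dffun forall i, X i} -> R)
  (psi_local : forall C, is_clique adj C -> local_to C (psi C))
  (pX_pos : forall x, 0 < pX x)
  (pX_fact : forall x, pX x =
      (\sum_(x' : {dffun forall i, X i}) \prod_(C | is_clique adj C) psi C x')^-1
      * \prod_(C | is_clique adj C) psi C x)
  (at_most_one : forall (i : 'I_N) (C1 C2 : {set 'I_N}),
      is_clique adj C1 -> is_clique adj C2 -> i \in C1 -> i \in C2 ->
      strictly_depends g i (psi C1) -> strictly_depends g i (psi C2) -> C1 = C2)
  (Cp : 'I_N -> {set 'I_N})
  (Cp_clique : forall i, is_clique adj (Cp i))
  (Cp_mem : forall i, i \in Cp i)
  (Cp_strict : forall i C, is_clique adj C -> i \in C ->
      strictly_depends g i (psi C) -> C = Cp i) :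
  is_MRF adj pX (fun j (x : {dffun forall i, X i}) => g j (x j)) /\
  exists U : {set 'I_N} -> (forall i, Y i) -> R,
    (forall (x : {dffun forall i, X i}) (j : 'I_N),
       U (Cp j) (gmap g x) =
       \sum_(x' : {dffun forall i, X i} |
               [forall k, if Cp k == Cp j then g k (x' k) == g k (x k)
                          else x' k == x k])
          psi (Cp j) x') /\
    (forall (x : {dffun forall i, X i}) (C : {set 'I_N}),
       is_clique adj C -> (forall j, C != Cp j) -> U C (gmap g x) = psi C x) /\
    (forall x : {dffun forall i, X i},
       prob pX (fun x' : {dffun forall i, X i} => [forall k, g k (x' k) == g k (x k)])
       = (\sum_(x' : {dffun forall i, X i}) \prod_(C | is_clique adj C) psi C x')^-1
         * \prod_(C | is_clique adj C) U C (gmap g x)).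
Proof.
split.
  exact: (mrf psi_local Cp_clique Cp_mem Cp_strict pX_pos pX_fact adj_irr).
exists (@U R N X Y g psi Cp).
split; [|split].
- move=> x j; rewrite (U_gmap psi_local Cp_mem Cp_strict) //.
  rewrite /V; have -> : @cls N Cp (Cp j) by apply/existsP; exists j.
  by [].
- move=> x C cC Hn; rewrite (U_gmap psi_local Cp_mem Cp_strict) //.
  rewrite /V; have -> : @cls N Cp C = false.
    by apply/negbTE/existsPn => j; exact: Hn j.
  by [].
- move=> x.
  rewrite (eq_bigr (fun C => @V R N X Y g psi Cp C x)); last first.
    by move=> C cC; rewrite (U_gmap psi_local Cp_mem Cp_strict).
  exact: (pY_fact psi_local Cp_clique Cp_mem Cp_strict pX_fact x).
Qed.
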